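(* Let $\mathbb F_q$ be a finite field and let $A \subseteq \mathbb F_q^n$ and $B \subseteq \mathbb F_q^m$ be nonempty, with $A \times B := \{(x,y) \in \mathbb F_q^{n+m} : x \in A, y \in B\}$. Then: (a) if $0 \in A$ and $0 \in B$, then $\omega(A \times B) = \omega(A) + \omega(B)$; (b) $\omega^\to(A \times B) = \omega^\to(A) + \omega^\to(B)$; (c) $\omega_{\mathrm{aff}}(A \times B) = \omega_{\mathrm{aff}}(A) + \omega_{\mathrm{aff}}(B)$; (d) if $0 \in A$ and $0 \in B$, then $\mathrm{rank}(A \times B) = \mathrm{rank}(A) + \mathrm{rank}(B)$; (e) $\mathrm{rank}_{\mathrm{aff}}(A \times B) = \mathrm{rank}_{\mathrm{aff}}(A) + \mathrm{rank}_{\mathrm{aff}}(B) - 1$.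
   Context: For nonempty $A \subseteq \mathbb F_q^n$: $\omega(A)$ is the largest dimension of a linear subspace of $\mathbb F_q^n$ contained in $A \cup \{0\}$; $\omega_{\mathrm{aff}}(A)$ is the largest dimension of an affine subspace of $\mathbb F_q^n$ contained in $A$; the direction set of $A$ is $A^\to := \{d \in \mathbb F_q^n : \exists x \in \mathbb F_q^n \text{ with } x + \lambda d \in A \text{ for all } \lambda \in \mathbb F_q\}$, and $\omega^\to(A) := \omega(A^\to)$. $\mathrm{rank}(A)$ is the dimension of the linear span of $A$. An affine relation on $x_1,\ldots,x_k$ is an equation $\sum_i \lambda_i x_i = 0$ with $\sum_i \lambda_i = 0$; $A$ is affinely independent if it has no such relation with some $\lambda_i \ne 0$, and $\mathrm{rank}_{\mathrm{aff}}(A)$ is the size of a maximal affinely independent subset of $A$. *)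

(* Defs.v *)
From HB Require Import structures.
From mathcomp Require Import all_boot all_order all_algebra.
Set Implicit Arguments. Unset Strict Implicit. Unset Printing Implicit Defensive.
Import GRing.Theory.
Local Open Scope ring_scope.

Section Defs.
Variable F : finFieldType.

Definition prodset (n m : nat) (A : {set 'rV[F]_n}) (B : {set 'rV[F]_m})
  : {set 'rV[F]_(n + m)} := [set row_mx x y | x in A, y in B].

(* A linear subspace is the row space of a square matrix M; its dimension is \rank M. *)
Definition lin_in (n : nat) (A : {set 'rV[F]_n}) (M : 'M[F]_n) : bool :=
  [forall v : 'rV[F]_n, (v <= M)%MS ==> (v \in A) || (v == 0)].

Definition omega (n : nat) (A : {set 'rV[F]_n}) : nat :=
  \max_(M : 'M[F]_n | lin_in A M) \rank M.

Definition aff_in (n : nat) (A : {set 'rV[F]_n}) (p : 'rV[F]_n * 'M[F]_n) : bool :=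
  [forall v : 'rV[F]_n, (v <= p.2)%MS ==> (p.1 + v \in A)].

Definition omega_aff (n : nat) (A : {set 'rV[F]_n}) : nat :=
  \max_(p : 'rV[F]_n * 'M[F]_n | aff_in A p) \rank p.2.

Definition dirset (n : nat) (A : {set 'rV[F]_n}) : {set 'rV[F]_n} :=
  [set d | [exists x : 'rV[F]_n, [forall l : F, x + l *: d \in A]]].

Definition omega_dir (n : nat) (A : {set 'rV[F]_n}) : nat := omega (dirset A).

Definition rank_set (n : nat) (A : {set 'rV[F]_n}) : nat :=
  \rank (\sum_(a in A) <<a>>)%MS.

Definition aff_indep (n : nat) (S : {set 'rV[F]_n}) : bool :=
  [forall l : {ffun 'rV[F]_n -> F},
     ((\sum_(x in S) l x *: x == 0) && (\sum_(x in S) l x == 0))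
       ==> [forall x in S, l x == 0]].

Definition rank_aff (n : nat) (A : {set 'rV[F]_n}) : nat :=
  \max_(S : {set 'rV[F]_n} | (S \subset A) && aff_indep S) #|S|.

End Defs.

(* Main.v *)
Require Import Defs.
From HB Require Import structures.
From mathcomp Require Import all_boot all_order all_algebra.
Set Implicit Arguments. Unset Strict Implicit. Unset Printing Implicit Defensive.
Import GRing.Theory.
Local Open Scope ring_scope.

Section S.
Variable F : finFieldType.

Lemma bigmax_att (I : finType) (P : pred I) (G : I -> nat) i0 :
  P i0 -> exists2 i, P i & \max_(j | P j) G j = G i.
Proof.
move=> Pi0; rewrite (bigmax_eq_arg i0 Pi0); case: arg_maxnP => // i Pi _.
by exists i.
Qed.

Lemma rank_row_mx_le m n1 n2 (X : 'M[F]_(m, n1)) (Y : 'M[F]_(m, n2)) :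
  (\rank (row_mx X Y) <= \rank X + \rank Y)%N.
Proof.
rewrite -mxrank_tr tr_row_mx -addsmxE -(mxrank_tr X) -(mxrank_tr Y).
exact: mxrank_adds_leqif.
Qed.

Lemma lsub_mul p n m (u : 'M[F]_(p, n + m)) (M : 'M[F]_(n + m, n + m)) :
  lsubmx (u *m M) = u *m lsubmx M.
Proof. by rewrite -{1}(hsubmxK M) mul_mx_row row_mxKl. Qed.
Lemma rsub_mul p n m (u : 'M[F]_(p, n + m)) (M : 'M[F]_(n + m, n + m)) :
  rsubmx (u *m M) = u *m rsubmx M.
Proof. by rewrite -{1}(hsubmxK M) mul_mx_row row_mxKr. Qed.

Lemma lsubD p n m (a b : 'M[F]_(p, n + m)) : lsubmx (a + b) = lsubmx a + lsubmx b.
Proof. by rewrite linearD. Qed.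
Lemma rsubD p n m (a b : 'M[F]_(p, n + m)) : rsubmx (a + b) = rsubmx a + rsubmx b.
Proof. by rewrite linearD. Qed.
Lemma lsubZ p n m c (a : 'M[F]_(p, n + m)) : lsubmx (c *: a) = c *: lsubmx a.
Proof. by rewrite linearZ. Qed.
Lemma rsubZ p n m c (a : 'M[F]_(p, n + m)) : rsubmx (c *: a) = c *: rsubmx a.
Proof. by rewrite linearZ. Qed.

Lemma mul_block_diag n m (u : 'rV[F]_(n + m)) (M1 : 'M[F]_n) (M2 : 'M[F]_m) :
  u *m block_mx M1 0 0 M2 = row_mx (lsubmx u *m M1) (rsubmx u *m M2).
Proof.
by rewrite -{1}(hsubmxK u) mul_row_block !mulmx0 addr0 add0r.
Qed.

Lemma omega_prod n m (A : {set 'rV[F]_n}) (B : {set 'rV[F]_m}) :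
  0 \in A -> 0 \in B -> omega (prodset A B) = (omega A + omega B)%N.
Proof.
move=> A0 B0; apply/eqP; rewrite eqn_leq; apply/andP; split.
  apply/bigmax_leqP => M /forallP HM.
  rewrite -{1}(hsubmxK M); apply: leq_trans (rank_row_mx_le _ _) _.
  rewrite leq_add //.
    rewrite -(genmxE (lsubmx M)); apply: leq_bigmax_cond.
    apply/forallP => v; apply/implyP; rewrite genmxE => /submxP[u ->].
    have := HM (u *m M); rewrite submxMl /= => /orP[/imset2P[x y Ax By E]|/eqP E].
      by rewrite -lsub_mul E row_mxKl Ax.
    by rewrite -lsub_mul E linear0 A0.
  rewrite -(genmxE (rsubmx M)); apply: leq_bigmax_cond.
  apply/forallP => v; apply/implyP; rewrite genmxE => /submxP[u ->].
  have := HM (u *m M); rewrite submxMl /= => /orP[/imset2P[x y Ax By E]|/eqP E].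
    by rewrite -rsub_mul E row_mxKr By.
  by rewrite -rsub_mul E linear0 B0.
have lin0 k (C : {set 'rV[F]_k}) : lin_in C 0.
  by apply/forallP => v; apply/implyP; rewrite submx0 => ->; rewrite orbT.
rewrite /omega.
have [M1 /forallP H1 ->] := bigmax_att (fun M => \rank M) (lin0 _ A).
have [M2 /forallP H2 ->] := bigmax_att (fun M => \rank M) (lin0 _ B).
rewrite -rank_diag_block_mx; apply: leq_bigmax_cond.
apply/forallP => v; apply/implyP => /submxP[u ->].
rewrite mul_block_diag; apply/orP; left; apply/imset2P.
exists (lsubmx u *m M1) (rsubmx u *m M2) => //.
  by have := H1 (lsubmx u *m M1); rewrite submxMl /= => /orP[|/eqP->].
by have := H2 (rsubmx u *m M2); rewrite submxMl /= => /orP[|/eqP->].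
Qed.

Lemma omega_aff_prod n m (A : {set 'rV[F]_n}) (B : {set 'rV[F]_m}) :
  A != set0 -> B != set0 ->
  omega_aff (prodset A B) = (omega_aff A + omega_aff B)%N.
Proof.
move=> /set0Pn[a0 Aa0] /set0Pn[b0 Bb0].
apply/eqP; rewrite eqn_leq; apply/andP; split.
  apply/bigmax_leqP => [[x M]] /forallP /= HM.
  rewrite -{1}(hsubmxK M); apply: leq_trans (rank_row_mx_le _ _) _.
  rewrite leq_add //.
    rewrite -(genmxE (lsubmx M)).
    apply: (leq_bigmax_cond (lsubmx x, <<lsubmx M>>%MS)).
    apply/forallP => v; apply/implyP; rewrite /= genmxE => /submxP[u ->].
    have := HM (u *m M); rewrite submxMl /= => /imset2P[a b Aa Bb E].
    by have := congr1 lsubmx E; rewrite lsubD row_mxKl lsub_mul => ->.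
  rewrite -(genmxE (rsubmx M)).
  apply: (leq_bigmax_cond (rsubmx x, <<rsubmx M>>%MS)).
  apply/forallP => v; apply/implyP; rewrite /= genmxE => /submxP[u ->].
  have := HM (u *m M); rewrite submxMl /= => /imset2P[a b Aa Bb E].
  by have := congr1 rsubmx E; rewrite rsubD row_mxKr rsub_mul => ->.
have aff0 k (C : {set 'rV[F]_k}) c : c \in C -> aff_in C (c, 0).
  by move=> Cc; apply/forallP => v; apply/implyP; rewrite submx0 => /eqP->; rewrite addr0.
rewrite /omega_aff.
have [[x1 M1] /forallP /= H1 ->] := bigmax_att (fun p => \rank p.2) (aff0 _ _ _ Aa0).
have [[x2 M2] /forallP /= H2 ->] := bigmax_att (fun p => \rank p.2) (aff0 _ _ _ Bb0).
rewrite -rank_diag_block_mx.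
apply: (leq_bigmax_cond (row_mx x1 x2, block_mx M1 0 0 M2)).
apply/forallP => v; apply/implyP => /= /submxP[u ->].
rewrite mul_block_diag add_row_mx; apply/imset2P.
exists (x1 + lsubmx u *m M1) (x2 + rsubmx u *m M2) => //.
  by have := H1 (lsubmx u *m M1); rewrite submxMl.
by have := H2 (rsubmx u *m M2); rewrite submxMl.
Qed.

Lemma dirset0 n (A : {set 'rV[F]_n}) : A != set0 -> 0 \in dirset A.
Proof.
move=> /set0Pn[a0 Aa0]; rewrite inE; apply/existsP; exists a0.
by apply/forallP => l; rewrite scaler0 addr0.
Qed.

Lemma dirset_prod n m (A : {set 'rV[F]_n}) (B : {set 'rV[F]_m}) :
  dirset (prodset A B) = prodset (dirset A) (dirset B).
Proof.
apply/setP => w; rewrite inE; apply/idP/idP.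
  move=> /existsP[x /forallP Hx]; rewrite -(hsubmxK w); apply/imset2P.
  exists (lsubmx w) (rsubmx w) => //; rewrite inE; apply/existsP.
    exists (lsubmx x); apply/forallP => l.
    have /imset2P[a b Aa Bb E] := Hx l.
    by have := congr1 lsubmx E; rewrite lsubD lsubZ row_mxKl => ->.
  exists (rsubmx x); apply/forallP => l.
  have /imset2P[a b Aa Bb E] := Hx l.
  by have := congr1 rsubmx E; rewrite rsubD rsubZ row_mxKr => ->.
move=> /imset2P[d1 d2]; rewrite !inE => /existsP[x1 /forallP H1].
move=> /existsP[x2 /forallP H2] ->.
apply/existsP; exists (row_mx x1 x2); apply/forallP => l.
rewrite scale_row_mx add_row_mx; apply/imset2P.
by exists (x1 + l *: d1) (x2 + l *: d2).
Qed.

Lemma omega_dir_prod n m (A : {set 'rV[F]_n}) (B : {set 'rV[F]_m}) :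
  A != set0 -> B != set0 ->
  omega_dir (prodset A B) = (omega_dir A + omega_dir B)%N.
Proof.
move=> nA nB; rewrite /omega_dir dirset_prod omega_prod //; exact: dirset0.
Qed.

Definition span k (X : {set 'rV[F]_k}) : 'M[F]_k := (\sum_(a in X) <<a>>)%MS.

Lemma span_sup k (X : {set 'rV[F]_k}) a : a \in X -> (a <= span X)%MS.
Proof. by move=> Xa; apply: (sumsmx_sup a) => //; rewrite genmxE. Qed.

Lemma span_sub k p (X : {set 'rV[F]_k}) (C : 'M[F]_(p, k)) :
  (forall a, a \in X -> (a <= C)%MS) -> (span X <= C)%MS.
Proof. by move=> H; apply/sumsmx_subP => a Xa; rewrite genmxE H. Qed.

Lemma spanMr k l p (X : {set 'rV[F]_k}) (R : 'M[F]_(k, l)) (C : 'M[F]_(p, l)) :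
  (forall a, a \in X -> (a *m R <= C)%MS) -> (span X *m R <= C)%MS.
Proof.
move=> H; rewrite /span (sumsmxMr_gen _ _ R).
by apply/sumsmx_subP => a Xa; rewrite genmxE (eqmxMr _ (genmxE a)) H.
Qed.

Lemma rank_set_prod n m (A : {set 'rV[F]_n}) (B : {set 'rV[F]_m}) :
  0 \in A -> 0 \in B -> rank_set (prodset A B) = (rank_set A + rank_set B)%N.
Proof.
move=> A0 B0.
have E : (span (prodset A B) :=: block_mx (span A) 0 0 (span B))%MS.
  apply/eqmxP/andP; split.
    apply: span_sub => w /imset2P[a b Aa Bb ->].
    have /submxP[u ->] := span_sup Aa; have /submxP[v ->] := span_sup Bb.
    have -> : row_mx (u *m span A) (v *m span B) = row_mx u v *m block_mx (span A) 0 0 (span B).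
      by rewrite mul_block_diag row_mxKl row_mxKr.
    exact: submxMl.
  rewrite block_mxEv col_mx_sub; apply/andP; split.
    have -> : row_mx (span A) (0 : 'M_(n, m)) = span A *m row_mx 1%:M 0.
      by rewrite mul_mx_row mulmx1 mulmx0.
    apply: spanMr => a Aa; rewrite mul_mx_row mulmx1 mulmx0.
    by apply: span_sup; apply/imset2P; exists a 0.
  have -> : row_mx (0 : 'M_(m, n)) (span B) = span B *m row_mx 0 1%:M.
    by rewrite mul_mx_row mulmx1 mulmx0.
  apply: spanMr => b Bb; rewrite mul_mx_row mulmx1 mulmx0.
  by apply: span_sup; apply/imset2P; exists 0 b.
by rewrite /rank_set -/(span _) E rank_diag_block_mx.
Qed.

Definition indep k (S : {set 'rV[F]_k}) : bool :=
  [forall l : {ffun 'rV[F]_k -> F},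
     (\sum_(x in S) l x *: x == 0) ==> [forall x in S, l x == 0]].

Lemma indepP k (S : {set 'rV[F]_k}) :
  reflect (forall l : {ffun 'rV[F]_k -> F},
             \sum_(x in S) l x *: x = 0 -> forall x, x \in S -> l x = 0)
          (indep S).
Proof.
apply: (iffP forallP) => [H l E x Sx | H l].
  by have /implyP/(_ (introT eqP E))/forallP/(_ x) := H l; rewrite Sx => /eqP.
apply/implyP => /eqP E; apply/forallP => x; apply/implyP => Sx.
by rewrite (H l E x Sx).
Qed.

Lemma span_coef k (X : {set 'rV[F]_k}) v :
  (v <= span X)%MS -> exists l : {ffun 'rV[F]_k -> F}, v = \sum_(a in X) l a *: a.
Proof.
move=> /sub_sums_genmxP[u ->]; exists [ffun a => u a 0 0].
apply: eq_bigr => a _; rewrite ffunE.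
by rewrite {1}[u a]mx11_scalar mul_scalar_mx.
Qed.

Lemma coef_span k (X : {set 'rV[F]_k}) (l : 'rV[F]_k -> F) :
  ((\sum_(a in X) l a *: a)%R <= span X)%MS.
Proof. by apply: summx_sub => a Xa; rewrite scalemx_sub // span_sup. Qed.

Lemma rank_add1 k (x : 'rV[F]_k) (U : 'M[F]_k) :
  ~~ (x <= U)%MS -> \rank (<<x>> + U)%MS = (\rank U).+1.
Proof.
move=> nxU.
have r1 : \rank <<x>>%MS = 1%N.
  rewrite genmxE; apply/eqP; rewrite eqn_leq rank_leq_row lt0n mxrank_eq0.
  by apply: contraNneq nxU => ->; rewrite sub0mx.
have r0 : \rank (<<x>> :&: U)%MS = 0%N.
  apply/eqP; apply: contraNT nxU => nz.
  have le1 : (\rank (<<x>> :&: U)%MS <= 1)%N by rewrite -[X in (_ <= X)%N]r1 mxrankS ?capmxSl.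
  have : (<<x>> <= <<x>> :&: U)%MS.
    by rewrite -(mxrank_leqif_sup (capmxSl _ _)).2 r1 eqn_leq le1 lt0n nz.
  by rewrite genmxE => /submx_trans; apply; apply: capmxSr.
by have := mxrank_sum_cap <<x>>%MS U; rewrite r1 r0 addn0 add1n.
Qed.

Lemma span_setU1 k (X : {set 'rV[F]_k}) x :
  x \notin X -> span (x |: X) = (<<x>> + span X)%MS.
Proof. by move=> nX; rewrite /span big_setU1. Qed.

Lemma sum_setU1 k (X : {set 'rV[F]_k}) x (l : 'rV[F]_k -> F) :
  x \notin X -> \sum_(a in x |: X) l a *: a = l x *: x + \sum_(a in X) l a *: a.
Proof. by move=> nX; rewrite big_setU1. Qed.

Lemma indepU1_l k (T : {set 'rV[F]_k}) x :
  indep (x |: T) -> x \notin T -> indep T.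
Proof.
move=> /indepP H nT; apply/indepP => l E y Ty.
pose l' := [ffun z => if z == x then 0 else l z].
have E' : \sum_(a in x |: T) l' a *: a = 0.
  rewrite sum_setU1 // ffunE eqxx scale0r add0r -[RHS]E.
  apply: eq_bigr => a Ta; rewrite ffunE; case: eqP => // ax.
  by move: nT; rewrite -ax Ta.
have := H l' E' y; rewrite setU1r // ffunE; case: eqP => [yx|_]; last by apply.
by move: nT; rewrite -yx Ty.
Qed.

Lemma indepU1_span k (T : {set 'rV[F]_k}) x :
  indep (x |: T) -> x \notin T -> ~~ (x <= span T)%MS.
Proof.
move=> /indepP H nT; apply/negP => /span_coef[c Ex].
pose l := [ffun z => if z == x then -1 else c z].
have E : \sum_(a in x |: T) l a *: a = 0.
  rewrite sum_setU1 // ffunE eqxx scaleN1r.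
  rewrite (eq_bigr (fun a => c a *: a)) -?Ex ?addNr //.
  move=> a Ta; rewrite ffunE; case: eqP => // ax.
  by move: nT; rewrite -ax Ta.
have := H l E x; rewrite setU11 ffunE eqxx => /(_ isT) /eqP.
by rewrite oppr_eq0 oner_eq0.
Qed.

Lemma indepU1_r k (T : {set 'rV[F]_k}) x :
  indep T -> ~~ (x <= span T)%MS -> indep (x |: T).
Proof.
move=> /indepP H nxs.
have nT : x \notin T by apply: contra nxs => Tx; apply: span_sup.
apply/indepP => l; rewrite sum_setU1 // => E.
have lx0 : l x = 0.
  apply: contraNeq nxs => nz.
  have -> : x = (l x)^-1 *: (- \sum_(a in T) l a *: a).
    have E2 : - (\sum_(a in T) l a *: a) = l x *: x.
      by apply/eqP; rewrite eq_sym -addr_eq0 E.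
    by rewrite E2 scalerA mulVf // scale1r.
  by rewrite scalemx_sub // (eqmx_opp _) coef_span.
move: E; rewrite lx0 scale0r add0r => E y.
by rewrite in_setU1 => /orP[/eqP->|Ty] //; apply: H.
Qed.

Lemma indep_rank k (S : {set 'rV[F]_k}) : indep S -> \rank (span S) = #|S|.
Proof.
have [N] := ubnP #|S|; elim: N S => // N IH S ltS indS.
have [->|/set0Pn[x Sx]] := eqVneq S set0.
  by rewrite /span big_set0 mxrank0 cards0.
rewrite -(setD1K Sx) in indS ltS *.
have nT : x \notin S :\ x by rewrite setD11.
rewrite span_setU1 // rank_add1 ?indepU1_span // IH ?(indepU1_l indS) //.
  by rewrite cardsU1 nT.
by move: ltS; rewrite cardsU1 nT.
Qed.

Lemma span_mono k (S X : {set 'rV[F]_k}) : S \subset X -> (span S <= span X)%MS.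
Proof. by move=> /subsetP sSX; apply: span_sub => a Sa; apply: span_sup; apply: sSX. Qed.

Lemma exists_basis k (X : {set 'rV[F]_k}) :
  exists2 S : {set 'rV[F]_k}, (S \subset X) && indep S & (span X <= span S)%MS.
Proof.
have [N] := ubnP #|X|; elim: N X => // N IH X ltX.
have [->|/set0Pn[x Xx]] := eqVneq X set0.
  exists set0; last by rewrite /span big_set0 sub0mx.
  rewrite sub0set; apply/indepP => l _ y; by rewrite inE.
rewrite -(setD1K Xx) in ltX *.
have nT : x \notin X :\ x by rewrite setD11.
have [|S /andP[sS iS] sp] := IH (X :\ x).
  by move: ltX; rewrite cardsU1 nT.
have [xs|nxs] := boolP (x <= span S)%MS.
  exists S; first by rewrite iS (subset_trans sS) ?subsetUr.
  by rewrite span_setU1 // addsmx_sub genmxE xs.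
have nS : x \notin S by apply: contra nxs => Sx; apply: span_sup.
exists (x |: S); first by rewrite indepU1_r // andbT setUS.
by rewrite !span_setU1 // addsmxS.
Qed.

Lemma max_indep k (X : {set 'rV[F]_k}) :
  \max_(T : {set 'rV[F]_k} | (T \subset X) && indep T) #|T| = \rank (span X).
Proof.
apply/eqP; rewrite eqn_leq; apply/andP; split.
  apply/bigmax_leqP => T /andP[sT iT]; rewrite -indep_rank //.
  by apply: mxrankS; apply: span_mono.
have [S SP sp] := exists_basis X.
apply: leq_trans (leq_bigmax_cond S SP).
case/andP: SP => sS iS; rewrite -indep_rank //; exact: mxrankS.
Qed.

Definition liftv n (x : 'rV[F]_n) : 'rV[F]_(1 + n) := row_mx (1%:M : 'M[F]_1) x.

Lemma lift_inj n : injective (@liftv n).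
Proof. by move=> x y /(congr1 rsubmx); rewrite !row_mxKr. Qed.

Lemma sum_lift n (S : {set 'rV[F]_n}) (c : 'rV[F]_n -> F) :
  \sum_(x in S) c x *: liftv x
  = row_mx ((\sum_(x in S) c x) *: (1%:M : 'M[F]_1)) (\sum_(x in S) c x *: x).
Proof.
elim/big_rec3: _ => [|x y1 y2 y3 _ ->]; first by rewrite scale0r row_mx0.
by rewrite /liftv scale_row_mx add_row_mx scalerDl.
Qed.

Lemma aff_lift n (S : {set 'rV[F]_n}) : aff_indep S = indep ((@liftv n) @: S).
Proof.
have linj : {in S &, injective (@liftv n)} by move=> ? ? _ _; apply: lift_inj.
apply/idP/idP.
  move=> /forallP H; apply/indepP => l E y /imsetP[x Sx ->].
  rewrite big_imset //= sum_lift in E.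
  rewrite -row_mx0 in E; case/eq_row_mx: E => E1 E2.
  have E1' : \sum_(x in S) l (liftv x) = 0.
    by move/(congr1 (fun M : 'M[F]_1 => M 0 0)): E1; rewrite !mxE eqxx mulr1.
  have e1 : \sum_(x in S) [ffun x => l (liftv x)] x *: x = \sum_(x in S) l (liftv x) *: x.
    by apply: eq_bigr => z _; rewrite ffunE.
  have e2 : \sum_(x in S) [ffun x => l (liftv x)] x = \sum_(x in S) l (liftv x).
    by apply: eq_bigr => z _; rewrite ffunE.
  have /implyP := H [ffun x => l (liftv x)]; rewrite e1 e2 E1' E2 !eqxx => /(_ isT).
  by move=> /forallP/(_ x); rewrite Sx ffunE => /eqP.
move=> /indepP H; apply/forallP => l; apply/implyP => /andP[/eqP E1 /eqP E2].
apply/forallP => x; apply/implyP => Sx.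
have := H [ffun y => l (rsubmx y)] _ (liftv x) (imset_f (@liftv n) Sx).
rewrite ffunE row_mxKr => -> //.
rewrite big_imset //= (eq_bigr (fun x => l x *: liftv x)) => [|z _]; last first.
  by rewrite ffunE row_mxKr.
by rewrite sum_lift E1 E2 scale0r row_mx0.
Qed.

Lemma rank_aff_span n (A : {set 'rV[F]_n}) :
  rank_aff A = \rank (span ((@liftv n) @: A)).
Proof.
rewrite -max_indep; apply/eqP; rewrite eqn_leq; apply/andP; split.
  apply/bigmax_leqP => S /andP[sSA aS].
  rewrite -[#|S|](card_imset _ (@lift_inj n)).
  by apply: leq_bigmax_cond; rewrite imsetS //= -aff_lift.
apply/bigmax_leqP => T /andP[sTA iT].
have ET : (@liftv n) @: (rsubmx @: T) = T.
  rewrite -imset_comp -[RHS]imset_id; apply: eq_in_imset => t Tt /=.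
  by have /imsetP[a _ ->] := subsetP sTA t Tt; rewrite /liftv row_mxKr.
rewrite -ET card_imset; last exact: lift_inj.
apply: leq_bigmax_cond; rewrite aff_lift ET iT andbT.
apply/subsetP => s /imsetP[t Tt ->].
by have /imsetP[a Aa ->] := subsetP sTA t Tt; rewrite /liftv row_mxKr.
Qed.

Definition shift n (A : {set 'rV[F]_n}) a0 := [set a - a0 | a in A].

Lemma rank_lift_shift n (A : {set 'rV[F]_n}) a0 : a0 \in A ->
  \rank (span ((@liftv n) @: A)) = (rank_set (shift A a0)).+1.
Proof.
move=> Aa0; set W := span (shift A a0).
have E : (span ((@liftv n) @: A) :=: block_mx (1%:M : 'M[F]_1) a0 0 W)%MS.
  apply/eqmxP/andP; split.
    apply: span_sub => y /imsetP[a Aa ->].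
    have /submxP[u Eu] := span_sup (imset_f (fun a => a - a0) Aa).
    have -> : liftv a = row_mx 1%:M u *m block_mx (1%:M : 'M[F]_1) a0 0 W.
      by rewrite mul_row_block mulmx1 mul1mx !mulmx0 addr0 -Eu addrC subrK.
    exact: submxMl.
  rewrite block_mxEv col_mx_sub; apply/andP; split.
    exact: span_sup (imset_f (@liftv n) Aa0).
  have -> : row_mx (0 : 'M[F]_(n, 1)) W = W *m row_mx 0 1%:M.
    by rewrite mul_mx_row mulmx0 mulmx1.
  apply: spanMr => d /imsetP[a Aa ->]; rewrite mul_mx_row mulmx0 mulmx1.
  have -> : row_mx (0 : 'M[F]_1) (a - a0) = liftv a - liftv a0.
    by rewrite /liftv opp_row_mx add_row_mx subrr.
  by rewrite addmx_sub ?(eqmx_opp _) ?span_sup ?imset_f.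
rewrite E.
have Ebl : block_mx (1%:M : 'M[F]_1) a0 0 W *m block_mx 1%:M (- a0) 0 1%:M
           = block_mx 1%:M 0 0 W.
  by rewrite mulmx_block !mulmx0 !mul0mx !mulmx1 !mul1mx !addr0 !add0r addNr.
rewrite -(@mxrankMfree _ _ _ _ _ (block_mx 1%:M (- a0) 0 1%:M)); last first.
  by rewrite row_free_unit unitmxE det_ublock !det1 mulr1 unitr1.
by rewrite Ebl rank_diag_block_mx mxrank1 add1n.
Qed.

Lemma shift_prod n m (A : {set 'rV[F]_n}) (B : {set 'rV[F]_m}) a0 b0 :
  shift (prodset A B) (row_mx a0 b0) = prodset (shift A a0) (shift B b0).
Proof.
apply/setP => w; apply/imsetP/imset2P.
  move=> [z /imset2P[a b Aa Bb ->] ->].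
  exists (a - a0) (b - b0); first by apply/imsetP; exists a.
    by apply/imsetP; exists b.
  by rewrite opp_row_mx add_row_mx.
move=> [d1 d2 /imsetP[a Aa ->] /imsetP[b Bb ->] ->].
exists (row_mx a b); first by apply/imset2P; exists a b.
by rewrite opp_row_mx add_row_mx.
Qed.

Lemma rank_aff_prod n m (A : {set 'rV[F]_n}) (B : {set 'rV[F]_m}) :
  A != set0 -> B != set0 ->
  rank_aff (prodset A B) = (rank_aff A + rank_aff B - 1)%N.
Proof.
move=> /set0Pn[a0 Aa0] /set0Pn[b0 Bb0].
have Pab : row_mx a0 b0 \in prodset A B by apply/imset2P; exists a0 b0.
rewrite !rank_aff_span !(rank_lift_shift Aa0, rank_lift_shift Bb0, rank_lift_shift Pab).
rewrite shift_prod rank_set_prod; last 2 first.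
- by apply/imsetP; exists a0; rewrite ?subrr.
- by apply/imsetP; exists b0; rewrite ?subrr.
by rewrite addSn addnS subn1.
Qed.
End S.

Unset Implicit Arguments.
Theorem proposition2p1 (F : finFieldType) (n m : nat)
  (A : {set 'rV[F]_n}) (B : {set 'rV[F]_m}) :
  A != set0 -> B != set0 ->
  [/\ (0 \in A -> 0 \in B -> omega (prodset A B) = (omega A + omega B)%N),
      omega_dir (prodset A B) = (omega_dir A + omega_dir B)%N,
      omega_aff (prodset A B) = (omega_aff A + omega_aff B)%N,
      (0 \in A -> 0 \in B -> rank_set (prodset A B) = (rank_set A + rank_set B)%N)
    & rank_aff (prodset A B) = (rank_aff A + rank_aff B - 1)%N].
Proof.
move=> nA nB; split.
- exact: omega_prod.
- exact: omega_dir_prod.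
- exact: omega_aff_prod.
- exact: rank_set_prod.
- exact: rank_aff_prod.
Qed.
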